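(* Let $P$ be a finite poset with a canonical labeling $\omega$ such that $P$ is $\omega$-consistent and saturated. Then there are antichains $A_0,A_1,\dots,A_k$ such that $$(P,\omega)=A_0\oplus_1A_1\oplus_{-1}A_2\oplus_1A_3\oplus_{-1}\cdots\oplus_{\pm1}A_k,$$ i.e. $P$ is the ordinal sum $A_0\oplus A_1\oplus\cdots\oplus A_k$ and, for each covering relation $x\prec y$ with $x\in A_{i}$, $y\in A_{i+1}$, the induced label is $\epsilon(x,y)=1$ if $i$ is even and $\epsilon(x,y)=-1$ if $i$ is odd.
   Context: Write $x\prec y$ if $y$ covers $x$; a labeling $\omega:P\to\{1,\dots,p\}$ induces $\epsilon(x,y)=1$ if $\omega(x)<\omega(y)$ and $-1$ otherwise on covering pairs. $P$ is $\omega$-consistent if for each $z$ the sum $\sum\epsilon(x_{i-1},x_i)$ is the same over all maximal chains $x_0\prec\cdots\prec x_n$ of $\Lambda_z=\{w\le z\}$; that value is the rank $\rho(z)$. $\omega$ is canonical if $P$ is $\omega$-consistent with rank function taking values in $\{0,1\}$ and $\rho(x)<\rho(y)$ implies $\omega(x)<\omega(y)$. $P$ is saturated if any $x,y$ with $|\rho(x)-\rho(y)|=1$ are comparable. The ordinal sum $P\oplus Q$ of posets has underlying set the disjoint union, with $x\le y$ iff $x\le_P y$, or $x\le_Q y$, or $x\in P,y\in Q$; the labeling $\epsilon\oplus_{1}\mu$ (resp. $\epsilon\oplus_{-1}\mu$) of $E(P\oplus Q)$ agrees with $\epsilon$ on $E(P)$, with $\mu$ on $E(Q)$, and equals $1$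 (resp. $-1$) on the remaining covering pairs (from maximal elements of $P$ to minimal elements of $Q$). Ordinal sums are associative. *)

(* Defs.v *)
From HB Require Import structures.
From mathcomp Require Import all_boot all_order all_algebra.
Set Implicit Arguments. Unset Strict Implicit. Unset Printing Implicit Defensive.
Import Order.Theory GRing.Theory Num.Theory.

Definition covers (d : Order.disp_t) (T : finPOrderType d) (x y : T) : bool :=
  ((x < y) && [forall z : T, ~~ ((x < z) && (z < y))])%O.

(* labeling omega : P -> {1,...,p}, a bijection *)
Definition labeling (T : finType) (w : T -> nat) : Prop :=
  injective w /\ (forall x, 1 <= w x <= #|T|)%N.

Definition eps (T : Type) (w : T -> nat) (x y : T) : int :=
  if (w x < w y)%N then 1%R else (-1)%R.

(* sum of epsilon along the chain x0, x1, ..., xn (s = [x1;...;xn]) *)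
Definition chain_sum (T : Type) (w : T -> nat) (x0 : T) (s : seq T) : int :=
  (\sum_(e <- pairmap (eps w) x0 s) e)%R.

(* x0 ≺ x1 ≺ ... ≺ xn is a maximal chain of Lambda_z = {w <= z}:
   x0 minimal, consecutive covering relations, and xn = z. *)
Definition max_chain_to (d : Order.disp_t) (T : finPOrderType d)
    (x0 : T) (s : seq T) (z : T) : bool :=
  [forall y : T, ~~ (y < x0)%O] && path (@covers d T) x0 s && (last x0 s == z).

Definition is_rank (d : Order.disp_t) (T : finPOrderType d)
    (w : T -> nat) (rho : T -> int) : Prop :=
  forall (x0 : T) (s : seq T) (z : T),
    max_chain_to x0 s z -> chain_sum w x0 s = rho z.

Definition consistent (d : Order.disp_t) (T : finPOrderType d) (w : T -> nat) : Prop :=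
  exists rho : T -> int, is_rank w rho.

Definition canonical_with_rank (d : Order.disp_t) (T : finPOrderType d)
    (w : T -> nat) (rho : T -> int) : Prop :=
  is_rank w rho /\ (forall z, rho z = 0%R \/ rho z = 1%R) /\
  (forall x y, (rho x < rho y)%R -> (w x < w y)%N).

Definition saturated (d : Order.disp_t) (T : finPOrderType d) (rho : T -> int) : Prop :=
  forall x y : T, `|rho x - rho y|%R = 1%R -> (x >=< y)%O.

(* Main.v *)
Require Import Defs.
From HB Require Import structures.
From mathcomp Require Import all_boot all_order all_algebra.
From mathcomp Require Import zify.
Set Implicit Arguments. Unset Strict Implicit.
Import Order.Theory GRing.Theory Num.Theory.

Lemma idx_lt (s : seq nat) : sorted leq s ->
  {in s &, forall a b, (index a s < index b s)%N = (a < b)%N}.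
Proof.
move=> so a b ain bin.
apply/idP/idP => H.
  have := sorted_leq_index leq_trans leqnn so a b ain bin (ltnW H).
  rewrite leq_eqVlt => /orP [/eqP E|//]; by rewrite E ltnn in H.
rewrite ltnNge; apply/negP => H2.
have := sorted_leq_index leq_trans leqnn so b a bin ain H2.
by rewrite leqNgt H.
Qed.

Section S.
Variables (d : Order.disp_t) (T : finPOrderType d) (w : T -> nat) (rho : T -> int).
Hypothesis Hrank : is_rank w rho.
Hypothesis H01 : forall z, rho z = 0%R \/ rho z = 1%R.
Hypothesis Hsat : saturated rho.

Definition dn (x : T) := #|[pred y : T | (y < x)%O]|.
Definition up (x : T) := #|[pred y : T | (x < y)%O]|.

Lemma dn_lt (x y : T) : (x < y)%O -> (dn x < dn y)%N.
Proof.
move=> xy; apply: proper_card; apply/properP; split.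
  apply/subsetP => z; rewrite !inE => zx; exact: lt_trans zx xy.
by exists x; rewrite !inE ?xy ?ltxx.
Qed.

Lemma up_lt (x y : T) : (x < y)%O -> (up y < up x)%N.
Proof.
move=> xy; apply: proper_card; apply/properP; split.
  apply/subsetP => z; rewrite !inE => zx; exact: lt_trans xy zx.
by exists y; rewrite !inE ?xy ?ltxx.
Qed.

Lemma cover_below (u x : T) : (u < x)%O -> exists c, (u <= c)%O /\ covers c x.
Proof.
move=> ux.
suff: forall n c, (up c < n)%N -> (u <= c)%O -> (c < x)%O ->
    exists c, (u <= c)%O /\ covers c x.
  by move=> /(_ (up u).+1 u (leqnn _) (lexx u) ux).
elim=> [|n IH] c //.
move=> Hn uc cx.
case: (boolP (covers c x)) => [cv|ncv]; first by exists c.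
rewrite /covers cx /= in ncv; move/forallPn: ncv => [z]; rewrite negbK => /andP[cz zx].
apply: (IH z) => //.
  by have := up_lt cz; lia.
exact: le_trans uc (ltW cz).
Qed.

Lemma chain_ex (x : T) : exists x0 s, max_chain_to x0 s x.
Proof.
suff: forall n x, (dn x < n)%N -> exists x0 s, max_chain_to x0 s x.
  by move=> /(_ (dn x).+1 x (leqnn _)).
elim=> [|n IH] {}x // Hn.
case: (boolP [forall y, ~~ (y < x)%O]) => [mn|nm].
  by exists x, [::]; rewrite /max_chain_to mn /= eqxx.
move/forallPn: nm => [y]; rewrite negbK => yx.
have [c [_ cv]] := cover_below yx.
have cx : (c < x)%O by move: cv => /andP[].
have [x0 [s]] : exists x0 s, max_chain_to x0 s c.
  by apply: IH; have := dn_lt cx; lia.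
move=> /andP[/andP[m p] /eqP l].
exists x0, (rcons s x).
by rewrite /max_chain_to m rcons_path p l cv last_rcons eqxx.
Qed.

Lemma rho_cov (x y : T) : covers x y -> rho y = (rho x + eps w x y)%R.
Proof.
move=> cv.
have [x0 [s ch]] := chain_ex x.
have ch' : max_chain_to x0 (rcons s y) y.
  move: ch => /andP[/andP[m p] /eqP l].
  by rewrite /max_chain_to m rcons_path p l cv last_rcons eqxx.
rewrite -(Hrank ch') -(Hrank ch) /chain_sum -cats1 pairmap_cat big_cat /= big_seq1.
by move: ch => /andP[_ /eqP ->].
Qed.

Lemma eps_cov (x y : T) : covers x y ->
  rho x <> rho y /\ eps w x y = (if rho x == 0%R then 1%R else (-1)%R).
Proof.
move=> cv; have := rho_cov cv.
rewrite /eps; case: ifP => _;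
  case: (H01 x) => ->; case: (H01 y) => -> //= ; lia.
Qed.

Lemma min_rho (x : T) : (forall y, ~~ (y < x)%O) -> rho x = 0%R.
Proof.
move=> mn.
have ch : max_chain_to x [::] x.
  by rewrite /max_chain_to /= eqxx !andbT; apply/forallP.
by rewrite -(Hrank ch) /chain_sum /= big_nil.
Qed.

Lemma sat_cmp (x y : T) : rho x <> rho y -> (x >=< y)%O.
Proof.
move=> ne; apply: Hsat.
by case: (H01 x) ne => ->; case: (H01 y) => ->.
Qed.

Lemma mid (x u : T) : (u < x)%O -> rho u = rho x ->
  exists c, (u < c)%O /\ (c < x)%O /\ rho c <> rho u.
Proof.
move=> ux E.
have [c [uc cv]] := cover_below ux.
have [ne _] := eps_cov cv.
have cx : (c < x)%O by move: cv => /andP[].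
exists c; split; last by split => //; rewrite E.
rewrite lt_neqAle uc andbT; apply/eqP => ec; apply: ne; by rewrite -ec.
Qed.

Lemma incmp_dn (x y : T) : ~~ (x >=< y)%O -> forall u, (u < x)%O -> (u < y)%O.
Proof.
move=> nc u ux.
have yxF : ~ (y < x)%O.
  by move=> yx; move: nc; rewrite comparable_sym lt_comparable.
have exy : rho x = rho y.
  by case: (boolP (rho x == rho y)) => [/eqP//|/eqP ne]; move: nc; rewrite sat_cmp.
case: (boolP (rho u == rho y)) => [/eqP e|/eqP ne].
  have [c [uc [cx nec]]] := mid ux (etrans e (esym exy)).
  have : (c >=< y)%O by apply: sat_cmp; rewrite -e; exact: nec.
  case/comparable_ltgtP => [cy|yc|ecy].
  - exact: lt_trans uc cy.
  - by exfalso; apply: yxF; exact: lt_trans yc cx.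
  - by rewrite -ecy.
have : (u >=< y)%O by apply: sat_cmp.
case/comparable_ltgtP => [//|yu|euy].
- by exfalso; apply: yxF; exact: lt_trans yu ux.
- by exfalso; apply: yxF; rewrite -euy.
Qed.

Lemma incmp_dn_eq (x y : T) : ~~ (x >=< y)%O -> dn x = dn y.
Proof.
move=> nc; apply: eq_card => u; rewrite !inE; apply/idP/idP.
  exact: incmp_dn.
by apply: incmp_dn; rewrite comparable_sym.
Qed.

Lemma dn_iff (x y : T) : (x < y)%O <-> (dn x < dn y)%N.
Proof.
split; first exact: dn_lt.
case: (boolP (x >=< y)%O) => [c|nc].
  case/comparable_ltgtP: c => [//|yx|->]; last by rewrite ltnn.
  by have := dn_lt yx; lia.
by rewrite (incmp_dn_eq nc) ltnn.
Qed.

Definition sq := sort leq (undup [seq dn x | x <- enum T]).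
Definition ff x := index (dn x) sq.

Lemma sq_sorted : sorted leq sq.
Proof. exact: (sort_sorted leq_total). Qed.

Lemma sq_uniq : uniq sq.
Proof. by rewrite /sq sort_uniq undup_uniq. Qed.

Lemma dn_in (x : T) : dn x \in sq.
Proof. by rewrite /sq mem_sort mem_undup; apply/mapP; exists x; rewrite ?mem_enum. Qed.

Lemma ff_lt (x : T) : (ff x < size sq)%N.
Proof. by rewrite /ff index_mem dn_in. Qed.

Lemma ff_surj i : (i < size sq)%N -> exists x, ff x = i.
Proof.
move=> Hi.
have : nth 0%N sq i \in sq by apply: mem_nth.
rewrite {1}/sq mem_sort mem_undup => /mapP [x _ Ex].
by exists x; rewrite /ff -Ex index_uniq // sq_uniq.
Qed.

Lemma ff_iff (x y : T) : (x < y)%O <-> (ff x < ff y)%N.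
Proof. by rewrite /ff idx_lt ?dn_in //; [exact: dn_iff | exact: sq_sorted]. Qed.

Lemma parity (x : T) : rho x = (if odd (ff x) then 1%R else 0%R).
Proof.
suff: forall n x, (ff x < n)%N -> rho x = (if odd (ff x) then 1%R else 0%R).
  by move=> /(_ (ff x).+1 x (leqnn _)).
elim=> [|n IH] {}x // Hn.
case E: (ff x) => [|m].
  rewrite /=; apply: min_rho => y; apply/negP => /ff_iff; lia.
have [y Ey] : exists y, ff y = m by apply: ff_surj; have := ff_lt x; lia.
have yx : (y < x)%O by apply/ff_iff; lia.
have Hy := IH y ltac:(lia).
have ne : rho y <> rho x.
  move=> e; have [c [yc [cx _]]] := mid yx e.
  move/ff_iff: yc; move/ff_iff: cx; lia.
rewrite Ey in Hy; rewrite /= ; move: ne; rewrite Hy.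
by case: (odd m) => /=; case: (H01 x) => ->.
Qed.

Lemma main_sec :
  exists (k : nat) (f : T -> nat),
    (forall x, (f x <= k)%N) /\
    ((0 < #|T|)%N -> forall i, (i <= k)%N -> exists x, f x = i) /\
    (forall x y : T, (x < y)%O <-> (f x < f y)%N) /\
    (forall x y : T, covers x y ->
       eps w x y = (if odd (f x) then (-1)%R else 1%R)).
Proof.
exists (size sq).-1, ff; split; [|split; [|split]].
- by move=> x; have := ff_lt x; lia.
- move=> /card_gt0P [x0 _] i Hi; apply: ff_surj.
  by have := ff_lt x0; lia.
- exact: ff_iff.
- move=> x y cv; have [_ ->] := eps_cov cv.
  by rewrite parity; case: (odd (ff x)).
Qed.

End S.

(* The antichains are the fibres A_i = f^-1(i), i = 0..k. *)
Theorem proposition3p4 (d : Order.disp_t) (T : finPOrderType d)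
    (w : T -> nat) (rho : T -> int) :
  labeling w ->
  consistent w ->
  canonical_with_rank w rho ->
  saturated rho ->
  exists (k : nat) (f : T -> nat),
    (forall x, (f x <= k)%N) /\
    ((0 < #|T|)%N -> forall i, (i <= k)%N -> exists x, f x = i) /\
    (forall x y : T, (x < y)%O <-> (f x < f y)%N) /\
    (forall x y : T, covers x y ->
       eps w x y = (if odd (f x) then (-1)%R else 1%R)).
Proof.
move=> _ _ [Hr [H01 _]] Hs.
exact: main_sec Hr H01 Hs.
Qed.
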